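(* Let $\Lambda$ be a subcategory of $\Gamma$ containing $\Theta$, let $\mathcal C$ be a category, $\mathcal A$ an abelian category, and $T:\mathcal C\wr\Lambda\to\mathcal A$ a functor such that $T(\varnothing)=0$. Then: (1) For every morphism $(f,(\gamma_e)_{e\in s(f)}) : C\to D$ of $\mathcal C\wr\Lambda$ with $C=(E,(C_e)_{e\in E})$, and every $M\subset E$, the image of $cr_M(T)(C)$ under $T(f,(\gamma_e))$ is contained in $cr_{f(M)}(T)(D)$, and this image is zero if $M$ is not contained in $s(f)$. (2) For every object $C=(E,(C_e)_{e\in E})$ and $M\subset E$, the morphism $T(i^C_M)$ restricts to an isomorphism $cr(T)(\rho_M(C))\to cr_M(T)(C)$. (3) For every object $C=(E,(C_e)_{e\in E})$ of $\mathcal C\wr\Lambda$ one has $T(C)=\bigoplus_{M\subset E} cr_M(T)(C)$.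
   Context: $\Gamma$ is the category whose objects are finite sets and whose morphisms $E\to F$ are partially defined functions $f$ (defined on a subset $s(f)\subset E$, its domain of definition), with the usual composition of partial functions; $\Theta$ is the subcategory with the same objects whose morphisms are the injective partial functions. For $M\subset E$, $i^E_M: M\to E$ is the inclusion and $r^M_E:E\to M$ is the partial function defined on $M$ and equal to the identity there. For a category $\mathcal C$ and a subcategory $\Lambda$ of $\Gamma$ containing $\Theta$, $\mathcal C\wr\Lambda$ is the category whose objects are pairs $(E,(C_e)_{e\in E})$ with $E$ a finite set and $C_e$ objects of $\mathcal C$, and whose morphisms $(E,(C_e))\to(F,(C'_e))$ are pairs $(f,(\gamma_e)_{e\in s(f)})$ with $f:E\to F$ a morphism of $\Lambda$ and $\gamma_e:C_e\to C'_{f(e)}$ morphisms of $\mathcal C$; composition is $(g,(\delta_x))\circ(f,(\gamma_e))=(g\circ f,(\delta_{f(e)}\circ\gamma_e)_{e\in s(g\circ f)})$. $\varnothing$ denotes the object with empty index set. For $C=(E,(C_e)_{e\in E})$ and $M\subset E$, $\rho_M(C)=(M,(C_e)_{e\in M})$; $i^C_M:\rho_M(C)\to C$ is $(i^E_M,(\mathrm{id}_{C_e})_{e\in M})$, $r^M_C:C\to\rho_M(C)$ is $(r^M_E,(\mathrm{id}_{C_e})_{e\in M})$, and $d_{C,M}=i^C_M\circ r^M_C$. The cross effects are $$cr_M(T)(C)=\bigcap_{U\subsetneq M}\ker T(d_{C,U})\ \cap\ \mathrm{im}\,T(d_{C,M}),\qquad cr(T)(C)=cr_E(T)(C).$$ 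*)

(* Defs.v *)
From HB Require Import structures.
From mathcomp Require Import all_boot all_algebra.

Set Implicit Arguments.
Unset Strict Implicit.
Unset Printing Implicit Defensive.
Import GRing.Theory.
Local Open Scope ring_scope.

Record Cat : Type := {
  cob : Type;
  chom : cob -> cob -> Type;
  ccomp : forall X Y Z, chom Y Z -> chom X Y -> chom X Z;
  cid : forall X, chom X X;
  ccompA : forall X Y Z W (h : chom Z W) (g : chom Y Z) (f : chom X Y),
      ccomp (ccomp h g) f = ccomp h (ccomp g f);
  ccomp1l : forall X Y (f : chom X Y), ccomp (cid Y) f = f;
  ccomp1r : forall X Y (f : chom X Y), ccomp f (cid X) = f
}.
Arguments ccomp {c X Y Z}.
Arguments cid {c}.

Record PreAdd : Type := {
  aob : Type;
  ahom : aob -> aob -> zmodType;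
  acomp : forall X Y Z, ahom Y Z -> ahom X Y -> ahom X Z;
  aid : forall X, ahom X X;
  acompA : forall X Y Z W (h : ahom Z W) (g : ahom Y Z) (f : ahom X Y),
      acomp (acomp h g) f = acomp h (acomp g f);
  acomp1l : forall X Y (f : ahom X Y), acomp (aid Y) f = f;
  acomp1r : forall X Y (f : ahom X Y), acomp f (aid X) = f;
  acompDl : forall X Y Z (g h : ahom Y Z) (f : ahom X Y),
      acomp (g + h) f = acomp g f + acomp h f;
  acompDr : forall X Y Z (g : ahom Y Z) (f f' : ahom X Y),
      acomp g (f + f') = acomp g f + acomp g f'
}.
Arguments acomp {p X Y Z}.
Arguments aid {p}.

Section AbelianDefs.
Variable A : PreAdd.

Definition is_mono (X Y : aob A) (m : ahom X Y) : Prop :=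
  forall Z (g h : ahom Z X), acomp m g = acomp m h -> g = h.

Definition is_epi (X Y : aob A) (e : ahom X Y) : Prop :=
  forall Z (g h : ahom Y Z), acomp g e = acomp h e -> g = h.

Definition is_kernel (X Y K : aob A) (f : ahom X Y) (k : ahom K X) : Prop :=
  acomp f k = 0 /\
  forall Z (g : ahom Z X), acomp f g = 0 -> exists! h : ahom Z K, acomp k h = g.

Definition is_cokernel (X Y Q : aob A) (f : ahom X Y) (c : ahom Y Q) : Prop :=
  acomp c f = 0 /\
  forall Z (g : ahom Y Z), acomp g f = 0 -> exists! h : ahom Q Z, acomp h c = g.

End AbelianDefs.

Record AbCat : Type := {
  ab_pa :> PreAdd;
  ab_zero : exists O : aob ab_pa, aid O = 0;
  ab_biprod : forall X Y : aob ab_pa, exists (P : aob ab_pa)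
      (i1 : ahom X P) (i2 : ahom Y P) (p1 : ahom P X) (p2 : ahom P Y),
      [/\ acomp p1 i1 = aid X, acomp p2 i2 = aid Y,
          acomp p1 i2 = 0, acomp p2 i1 = 0 &
          acomp i1 p1 + acomp i2 p2 = aid P];
  ab_ker : forall (X Y : aob ab_pa) (f : ahom X Y), exists K (k : ahom K X), is_kernel f k;
  ab_coker : forall (X Y : aob ab_pa) (f : ahom X Y), exists Q (c : ahom Y Q), is_cokernel f c;
  ab_mono_normal : forall (X Y : aob ab_pa) (m : ahom X Y), is_mono m ->
      exists Z (f : ahom Y Z), is_kernel f m;
  ab_epi_normal : forall (X Y : aob ab_pa) (e : ahom X Y), is_epi e ->
      exists Z (f : ahom Z X), is_cokernel f e
}.

(* A partial map E -> F is a function E -> option F; its domain of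
   definition is s(f) = [set e | f e != None]. *)
Definition pcomp (E F G : finType) (f : E -> option F) (g : F -> option G)
  : E -> option G := fun e => match f e with Some y => g y | None => None end.

Definition pinjective (E F : finType) (f : E -> option F) : Prop :=
  forall e e' y, f e = Some y -> f e' = Some y -> e = e'.

Definition pdom (E F : finType) (f : E -> option F) : {set E} :=
  [set e | f e != None].

Definition pimage (E F : finType) (f : E -> option F) (M : {set E}) : {set F} :=
  [set y | [exists e in M, f e == Some y]].

(* A subcategory Lambda of Gamma containing Theta: a class of partial maps
   closed under composition and containing all injective partial maps
   (in particular identities); it has all finite sets as objects. *)
Record PSubcat : Type := {
  lam : forall E F : finType, (E -> option F) -> Prop;
  lam_comp : forall (E F G : finType) (f : E -> option F) (g : F -> option G),
      lam f -> lam g -> lam (pcomp f g);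
  lam_inj : forall (E F : finType) (f : E -> option F), pinjective f -> lam f
}.

Section Wreath.
Variables (C : Cat) (L : PSubcat).

Record wob : Type := WOb { widx : finType; wfam : widx -> cob C }.

Record wmor (X Y : wob) : Type := WMor {
  wf : widx X -> option (widx Y);
  wlam : lam L wf;
  wgam : forall e y, wf e = Some y -> @chom C (@wfam X e) (@wfam Y y)
}.

Lemma none_some_False (T : Type) (z : T) : None = Some z -> False.
Proof. by []. Qed.

Definition wcomp_gam (X Y Z : wob) (f : wmor X Y) (g : wmor Y Z)
    (e : widx X) (z : widx Z) : pcomp (wf f) (wf g) e = Some z ->
    @chom C (@wfam X e) (@wfam Z z) :=
  match wf f e as o return
        (wf f e = o ->
         match o with Some y => wf g y | None => None end = Some z ->
         @chom C (@wfam X e) (@wfam Z z)) with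
  | Some y => fun hf hg => ccomp (@wgam _ _ g _ _ hg) (@wgam _ _ f _ _ hf)
  | None => fun _ hn => match none_some_False hn with end
  end erefl.

(* composition: wcomp f g = g o f *)
Definition wcomp (X Y Z : wob) (f : wmor X Y) (g : wmor Y Z) : wmor X Z :=
  @WMor X Z (pcomp (wf f) (wf g)) (lam_comp (wlam f) (wlam g))
        (@wcomp_gam X Y Z f g).

Definition eqhom (I : Type) (F : I -> cob C) (a b : I) (h : a = b)
  : @chom C (F a) (F b) :=
  match h in _ = b' return @chom C (F a) (F b') with erefl => cid (F a) end.

Lemma pinjective_Some (E : finType) : pinjective (fun e : E => Some e).
Proof. by move=> e e' y [->] [->]. Qed.

Definition wid (X : wob) : wmor X X :=
  @WMor X X (fun e => Some e) (lam_inj L (@pinjective_Some (widx X)))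
        (fun e y h => eqhom (@wfam X) (Some_inj h)).

Definition wrho (X : wob) (M : {set widx X}) : wob :=
  @WOb {x : widx X | x \in M} (fun x => @wfam X (val x)).

Lemma pinjective_incl (X : wob) (M : {set widx X}) :
  pinjective (fun x : {x : widx X | x \in M} => Some (val x)).
Proof. by move=> e e' y [h1] [h2]; apply: val_inj; rewrite /= h1 h2. Qed.

Lemma insub_SomeK (T : eqType) (P : pred T) (sT : subType P) (e : T) (y : sT) :
  insub e = Some y -> e = val y.
Proof. by case: insubP => // u _ <- [->]. Qed.

Lemma pinjective_retr (X : wob) (M : {set widx X}) :
  pinjective (fun e : widx X => (insub e : option {x : widx X | x \in M})).
Proof. by move=> e e' y /insub_SomeK -> /insub_SomeK ->. Qed.

Definition wincl (X : wob) (M : {set widx X}) : wmor (wrho M) X :=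
  @WMor (wrho M) X (fun x => Some (val x)) (lam_inj L (@pinjective_incl X M))
        (fun x y h => eqhom (@wfam X) (Some_inj h)).

Definition wretr (X : wob) (M : {set widx X}) : wmor X (wrho M) :=
  @WMor X (wrho M) (fun e => insub e) (lam_inj L (@pinjective_retr X M))
        (fun e y h => eqhom (@wfam X) (insub_SomeK h)).

Definition wd (X : wob) (M : {set widx X}) : wmor X X :=
  wcomp (wretr M) (wincl M).

Definition wempty : wob := @WOb void (fun v => match v with end).

End Wreath.

Record WFunctor (C : Cat) (L : PSubcat) (A : PreAdd) : Type := {
  Fob : wob C -> aob A;
  Fmor : forall X Y : wob C, wmor L X Y -> ahom (Fob X) (Fob Y);
  Fmor_id : forall X : wob C, Fmor (wid L X) = aid (Fob X);
  Fmor_comp : forall (X Y Z : wob C) (f : wmor L X Y) (g : wmor L Y Z),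
      Fmor (wcomp f g) = acomp (Fmor g) (Fmor f)
}.
Arguments Fob {C L A}.
Arguments Fmor {C L A} _ {X Y}.

(* A subobject S of an object Y of A is described by the class of
   morphisms g : Z -> Y factoring through S.  For S = ker f this means
   f o g = 0; for S = im f = ker (coker f) it means that every c with
   c o f = 0 satisfies c o g = 0; intersections are conjunctions. *)

Definition in_ker (A : PreAdd) (X Y Z : aob A) (f : ahom X Y) (g : ahom Z X)
  : Prop := acomp f g = 0.

Definition in_im (A : PreAdd) (X Y Z : aob A) (f : ahom X Y) (g : ahom Z Y)
  : Prop := forall W (c : ahom Y W), acomp c f = 0 -> acomp c g = 0.

(* g : Z -> T(X) factors through cr_M(T)(X)
     = \bigcap_{U \subsetneq M} ker T(d_{X,U}) \cap im T(d_{X,M}) *)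
Definition in_cr (C : Cat) (L : PSubcat) (A : PreAdd) (T : WFunctor C L A)
    (X : wob C) (M : {set widx X}) (Z : aob A) (g : ahom Z (Fob T X)) : Prop :=
  (forall U : {set widx X}, U \proper M -> in_ker (Fmor T (wd L U)) g) /\
  in_im (Fmor T (wd L M)) g.
Arguments in_cr {C L A} T {X} M {Z} g.

(* Main.v *)
Require Import Defs.
From HB Require Import structures.
From mathcomp Require Import all_boot all_algebra.
From Stdlib Require Import ProofIrrelevance FunctionalExtensionality.
Import GRing.Theory.
Local Open Scope ring_scope.
Set Implicit Arguments. Unset Strict Implicit.

Section W.
Variables (C : Cat) (L : PSubcat).

Lemma wmor_eq (X Y : wob C) (f g : wmor L X Y) : (forall e, wf f e = wf g e) ->
  (forall e y (h1 : wf f e = Some y) (h2 : wf g e = Some y), wgam h1 = wgam h2) -> f = g.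
Proof.
case: f => f1 l1 g1; case: g => f2 l2 g2 /= Hf.
have E := functional_extensionality _ _ Hf; subst f2 => Hg.
rewrite (proof_irrelevance _ l1 l2); f_equal.
apply functional_extensionality_dep => e; apply functional_extensionality_dep => y.
apply functional_extensionality_dep => h; exact: Hg.
Qed.

Lemma wcomp_gamE (X Y Z : wob C) (f : wmor L X Y) (g : wmor L Y Z) e y z
  (hf : wf f e = Some y) (hg : wf g y = Some z) (h : wf (wcomp f g) e = Some z) :
  wgam h = ccomp (wgam hg) (wgam hf).
Proof.
have aux : forall (o : option (widx Y)) (e0 : wf f e = o)
   (h : match o with Some y0 => wf g y0 | None => None end = Some z),
  (match o as o' return (wf f e = o' -> match o' with Some y0 => wf g y0 | None => None end = Some z
     -> @chom C (wfam e) (wfam z)) with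
  | Some y0 => fun hf0 hg0 => ccomp (wgam hg0) (wgam hf0)
  | None => fun _ hn => match none_some_False hn with end end) e0 h = ccomp (wgam hg) (wgam hf).
  case=> [y'|] e0 h0 //.
  have Ey : y' = y by move: e0; rewrite hf => -[].
  subst y'.
  by rewrite (proof_irrelevance _ e0 hf) (proof_irrelevance _ h0 hg).
exact: (aux _ erefl h).
Qed.

Lemma wf_wcomp (X Y Z : wob C) (f : wmor L X Y) (g : wmor L Y Z) e :
  wf (wcomp f g) e = match wf f e with Some y => wf g y | None => None end.
Proof. by []. Qed.

Lemma eqhom_cid (I : Type) (F : I -> cob C) (a : I) (h : a = a) : eqhom F h = cid (F a).
Proof. by rewrite (proof_irrelevance _ h erefl). Qed.

Lemma wf_wd (X : wob C) (U : {set widx X}) e :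
  wf (wd L U) e = if e \in U then Some e else None.
Proof. rewrite /= /Defs.pcomp; case: insubP => [u He Eu|/negbTE ->] //=; by rewrite He Eu. Qed.

Lemma wd_gam (X : wob C) (U : {set widx X}) e (h : wf (wd L U) e = Some e) :
  wgam h = cid (wfam e).
Proof.
have He : e \in U by move: h; rewrite wf_wd; case: ifP.
have hf : wf (wretr L U) e = Some (exist _ e He) by rewrite /= insubT.
have hg : wf (wincl L U) (exist _ e He) = Some e by [].
rewrite (wcomp_gamE hf hg) /= !eqhom_cid.
by rewrite ccomp1l.
Qed.

Lemma wid_gam (X : wob C) e (h : wf (wid L X) e = Some e) : wgam h = cid (wfam e).
Proof. by rewrite /= eqhom_cid. Qed.

Lemma wd_setT (X : wob C) : wd L [set: widx X] = wid L X.
Proof.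
apply: wmor_eq => [e|e y h1 h2]; first by rewrite wf_wd in_setT.
have E : y = e by move: h2 => /= -[].
subst y; by rewrite wd_gam wid_gam.
Qed.

Lemma wd_comp (X : wob C) (U V : {set widx X}) :
  wcomp (wd L U) (wd L V) = wd L (U :&: V).
Proof.
have Hf : forall e, wf (wcomp (wd L U) (wd L V)) e = wf (wd L (U :&: V)) e.
  move=> e; rewrite wf_wcomp !wf_wd inE.
  by case: (e \in U); rewrite ?wf_wd //; case: (e \in V).
apply: wmor_eq => // e y h1 h2.
have E : y = e by move: h2; rewrite wf_wd; case: ifP => // _ [].
subst y; rewrite wd_gam.
have /setIP [HU HV] : e \in U :&: V by move: h2; rewrite wf_wd; case: ifP.
have hf : wf (wd L U) e = Some e by rewrite wf_wd HU.
have hg : wf (wd L V) e = Some e by rewrite wf_wd HV.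
by rewrite (wcomp_gamE hf hg) !wd_gam ccomp1l.
Qed.

Definition preim (X Y : wob C) (f : wmor L X Y) (V : {set widx Y}) : {set widx X} :=
  [set e | match wf f e with Some y => y \in V | None => false end].

Lemma wd_nat (X Y : wob C) (f : wmor L X Y) (V : {set widx Y}) :
  wcomp f (wd L V) = wcomp (wd L (preim f V)) f.
Proof.
have Hf : forall e, wf (wcomp f (wd L V)) e = wf (wcomp (wd L (preim f V)) f) e.
  move=> e; rewrite [LHS]wf_wcomp [RHS]wf_wcomp wf_wd inE.
  by case E: (wf f e) => [y|]; rewrite ?wf_wd ?E //; case: ifP.
apply: wmor_eq => // e z h1 h2.
have [y E] : exists y, wf f e = Some y.
  by move: (h1); rewrite wf_wcomp; case: (wf f e) => [y|] //; exists y.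
  have Hy : y \in V by move: (h1); rewrite wf_wcomp E wf_wd; case: ifP.
  have Ez : y = z by move: (h1); rewrite wf_wcomp E wf_wd Hy => -[].
  subst z.
  have hg : wf (wd L V) y = Some y by rewrite wf_wd Hy.
  have hf : wf (wd L (preim f V)) e = Some e by rewrite wf_wd inE E Hy.
  by rewrite (wcomp_gamE E hg) (wcomp_gamE hf E) !wd_gam ccomp1l ccomp1r.
Qed.

Lemma wincl_retr (X : wob C) (M : {set widx X}) :
  wcomp (wincl L M) (wretr L M) = wid L (wrho M).
Proof.
have Hf : forall x, wf (wcomp (wincl L M) (wretr L M)) x = wf (wid L (wrho M)) x.
  by move=> x; rewrite wf_wcomp /= valK.
apply: wmor_eq => // x y h1 h2.
have E : y = x by move: h2 => /= -[].
subst y; rewrite wid_gam.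
have hf : wf (wincl L M) x = Some (val x) by [].
have hg : wf (wretr L M) (val x) = Some x by rewrite /= valK.
by rewrite (wcomp_gamE hf hg) /= !eqhom_cid ccomp1l.
Qed.
End W.
Section Alg.
Variable A : PreAdd.
Implicit Types X Y Z : aob A.

Lemma acomp0l X Y Z (f : ahom X Y) : acomp (0 : ahom Y Z) f = 0.
Proof. have H := acompDl (0 : ahom Y Z) 0 f; rewrite addr0 in H.
by apply: (addrI (acomp 0 f)); rewrite -H addr0. Qed.
Lemma acomp0r X Y Z (f : ahom Y Z) : acomp f (0 : ahom X Y) = 0.
Proof. have H := acompDr f (0 : ahom X Y) 0; rewrite addr0 in H.
by apply: (addrI (acomp f 0)); rewrite -H addr0. Qed.
Lemma acompNl X Y Z (g : ahom Y Z) (f : ahom X Y) : acomp (- g) f = - acomp g f.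
Proof. by apply/eqP; rewrite -subr_eq0 opprK -acompDl addNr acomp0l. Qed.
Lemma acompNr X Y Z (g : ahom Y Z) (f : ahom X Y) : acomp g (- f) = - acomp g f.
Proof. by apply/eqP; rewrite -subr_eq0 opprK -acompDr addNr acomp0r. Qed.
Lemma acomp_suml X Y Z (I : Type) (r : seq I) (P : pred I) (F : I -> ahom Y Z) (f : ahom X Y) :
  acomp (\sum_(i <- r | P i) F i) f = \sum_(i <- r | P i) acomp (F i) f.
Proof. by apply: (big_morph (fun g => acomp g f)) => [g h|]; rewrite ?acompDl ?acomp0l. Qed.
Lemma acomp_sumr X Y Z (I : Type) (r : seq I) (P : pred I) (F : I -> ahom X Y) (g : ahom Y Z) :
  acomp g (\sum_(i <- r | P i) F i) = \sum_(i <- r | P i) acomp g (F i).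
Proof. by apply: (big_morph (fun f => acomp g f)) => [f h|]; rewrite ?acompDr ?acomp0r. Qed.
End Alg.

Definition sgn (V : zmodType) (b : bool) (x : V) := if b then - x else x.

Lemma sgnN (V : zmodType) b (x : V) : sgn (~~ b) x + sgn b x = 0.
Proof. by case: b; rewrite /sgn /= ?subrr // addNr. Qed.

Lemma flip (T : finType) (V : zmodType) (N : {set T}) a (F : {set T} -> V) :
  a \in N -> (forall W, F (a |: W) = F (W :\ a)) ->
  \sum_(W : {set T} | W \subset N) sgn (odd #|N :\: W|) (F W) = 0.
Proof.
move=> aN HF.
rewrite (bigID (fun W : {set T} => a \in W)) /=.
rewrite (reindex_onto (fun W : {set T} => a |: W) (fun W : {set T} => W :\ a)) /=; last first.
  by move=> W /andP [_ aW]; rewrite setD1K.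
have E : forall j, ((a |: j \subset N) && (a \in a |: j)) && ((a |: j) :\ a == j)
    = (j \subset N) && (a \notin j).
  move=> j; rewrite subUset sub1set aN setU11 /=.
  case: (boolP (a \in j)) => Ha; last by rewrite setU1K // eqxx !andbT.
  have -> : ((a |: j) :\ a == j) = false.
    by apply/negbTE/eqP => E; move: Ha; rewrite -E !inE eqxx.
  by rewrite !andbF.
rewrite (eq_bigl _ _ E) -big_split /=; apply: big1 => j /andP [jN aj].
have -> : F (a |: j) = F j.
  rewrite HF; congr F; apply/setP => x; rewrite !inE.
  by case: eqP => // ->; rewrite (negbTE aj).
have -> : #|N :\: j| = (#|N :\: (a |: j)|).+1.
  have E2 : N :\: j :\ a = N :\: (a |: j).
    by apply/setP => x; rewrite !inE; case: (x == a).
  by rewrite (cardsD1 a (N :\: j)) !inE aN aj /= add1n E2.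
by rewrite /= addrC sgnN.
Qed.

Section Main.
Variables (L : PSubcat) (C : Cat) (A : PreAdd) (T : WFunctor C L A).

Definition ee (X : wob C) (U : {set widx X}) := Fmor T (wd L U).

Lemma eeT (X : wob C) : ee [set: widx X] = aid (Fob T X).
Proof. by rewrite /ee wd_setT Fmor_id. Qed.

Lemma eeM (X : wob C) (U V : {set widx X}) : acomp (ee V) (ee U) = ee (U :&: V).
Proof. by rewrite /ee -Fmor_comp wd_comp. Qed.

Lemma in_imP (Y Z : aob A) (e : ahom Y Y) (g : ahom Z Y) :
  acomp e e = e -> in_im e g <-> acomp e g = g.
Proof.
move=> ee_; split.
- move=> H; have := H _ (aid Y - e).
  rewrite acompDl acompNl ee_ acomp1l subrr => /(_ erefl).
  by rewrite acompDl acompNl acomp1l => /eqP; rewrite subr_eq0 eq_sym => /eqP.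
- move=> Eg W c Hc; by rewrite -Eg -acompA Hc acomp0l.
Qed.

Lemma crP (X : wob C) (M : {set widx X}) (Z : aob A) (g : ahom Z (Fob T X)) :
  in_cr T M g <-> forall U, acomp (ee U) g = if M \subset U then g else 0.
Proof.
have idem : acomp (ee M) (ee M) = ee M by rewrite eeM setIid.
split.
- case=> Hk /(in_imP _ idem) Eg U.
  rewrite -Eg -acompA eeM Eg.
  case: ifP => HU; first by rewrite (setIidPl HU) Eg.
  apply: Hk; rewrite properE subsetIl /=; apply: contraFN HU.
  by move=> H; apply: subset_trans H (subsetIr _ _).
- move=> H; split.
  + move=> U; rewrite properE => /andP [_ HU].
    by rewrite /in_ker -/(ee U) H (negbTE HU).
  + by apply/(in_imP _ idem); rewrite H subxx.
Qed.

Lemma preim_sub (X Y : wob C) (phi : wmor L X Y) (M : {set widx X}) (V : {set widx Y}) :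
  M \subset pdom (wf phi) ->
  (M \subset preim phi V) = (pimage (wf phi) M \subset V).
Proof.
move=> /subsetP Hd; apply/subsetP/subsetP.
- move=> H y; rewrite inE => /existsP [e /andP [eM /eqP E]].
  by move: (H _ eM); rewrite inE E.
- move=> H e eM; rewrite inE.
  move: (Hd _ eM); rewrite inE; case E: (wf phi e) => [y|] // _.
  apply: H; rewrite inE; apply/existsP; exists e; by rewrite eM E eqxx.
Qed.

Lemma part1 (X Y : wob C) (phi : wmor L X Y) (M : {set widx X})
          (Z : aob A) (g : ahom Z (Fob T X)) :
     in_cr T M g ->
     in_cr T (pimage (wf phi) M) (acomp (Fmor T phi) g) /\
     (~~ (M \subset pdom (wf phi)) -> acomp (Fmor T phi) g = 0).
Proof.
move/crP => Hg.
have key : forall V, acomp (ee V) (acomp (Fmor T phi) g) =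
    acomp (Fmor T phi) (if M \subset preim phi V then g else 0).
  by move=> V; rewrite -acompA /ee -Fmor_comp wd_nat Fmor_comp acompA -/(ee _) Hg.
have kill : ~~ (M \subset pdom (wf phi)) -> acomp (Fmor T phi) g = 0.
  move=> H.
  have -> : acomp (Fmor T phi) g = acomp (ee [set: widx Y]) (acomp (Fmor T phi) g).
    by rewrite eeT acomp1l.
  rewrite key.
  have -> : M \subset preim phi [set: widx Y] = false.
    apply/negbTE; apply: contra H => H'; apply: subset_trans H' _.
    by apply/subsetP => e; rewrite !inE; case: (wf phi e).
  by rewrite acomp0r.
split => //; apply/crP => V.
case: (boolP (M \subset pdom (wf phi))) => Hd; last by rewrite kill // acomp0r; case: ifP.
by rewrite key (preim_sub _ Hd); case: ifP => //; rewrite acomp0r.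
Qed.


Lemma pimage_incl (X : wob C) (M : {set widx X}) :
  pimage (wf (wincl L M)) [set: widx (wrho M)] = M.
Proof.
apply/setP => x; rewrite !inE; apply/existsP/idP.
- by case=> y /andP [_ /eqP [<-]]; exact: (valP y).
- by move=> Hx; exists (exist _ x Hx); rewrite inE eqxx.
Qed.

Lemma pimage_retr (X : wob C) (M : {set widx X}) :
  pimage (wf (wretr L M)) M = [set: widx (wrho M)].
Proof.
apply/setP => y; rewrite !inE; apply/existsP; exists (val y).
by rewrite (valP y) /= valK eqxx.
Qed.

Lemma acomp_sgnr (Y Z W : aob A) b (g : ahom Z W) (f : ahom Y Z) :
  acomp g (sgn b f) = sgn b (acomp g f).
Proof. by case: b; rewrite /sgn ?acompNr. Qed.

Definition pp (X : wob C) (M : {set widx X}) : ahom (Fob T X) (Fob T X) :=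
  \sum_(U : {set widx X} | U \subset M) sgn (odd #|M :\: U|) (ee U).

Lemma pp_cr (X : wob C) (M : {set widx X}) : in_cr T M (pp M).
Proof.
apply/crP => V; rewrite /pp acomp_sumr.
under eq_bigr do rewrite acomp_sgnr eeM.
case: ifP => HMV.
- apply: eq_bigr => U HU; congr sgn; congr ee.
  by apply/setIidPl; apply: subset_trans HU HMV.
- have /subsetPn [a aM aV] : ~~ (M \subset V) by rewrite HMV.
  apply: flip aM _ => W; congr ee; apply/setP => x; rewrite !inE.
  by case: eqP => // ->; rewrite (negbTE aV) !andbF.
Qed.

Lemma sum_pp (X : wob C) : \sum_(M : {set widx X}) pp M = aid (Fob T X).
Proof.
rewrite /pp (exchange_big_dep xpredT) //= (bigD1 [set: widx X]) //=.
rewrite (eq_bigl (fun M : {set widx X} => M == [set: widx X])); last by move=> M; rewrite subTset.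
rewrite big_pred1_eq setDv cards0 /= eeT big1 ?addr0 // => U HU.
rewrite (reindex_inj (@setC_inj _)) /=.
rewrite (eq_bigl (fun W : {set widx X} => W \subset ~: U)); last by move=> W; rewrite subsetC.
have /subsetPn [a _ aU] : ~~ ([set: widx X] \subset U) by rewrite subTset.
apply: etrans (flip (N := ~: U) (a := a) (F := fun _ => ee U) _ _); last first.
- by []. 
- by rewrite inE.
by apply: eq_bigr => W _; rewrite !setDE setIC.
Qed.

Lemma cr_uniq (X : wob C) (Z : aob A) (g : {set widx X} -> ahom Z (Fob T X)) :
  (forall M, in_cr T M (g M)) ->
  \sum_(M : {set widx X}) g M = 0 -> forall M, g M = 0.
Proof.
move=> Hg H0.
have HU : forall U : {set widx X}, \sum_(M : {set widx X} | M \subset U) g M = 0.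
  move=> U; have := congr1 (acomp (ee U)) H0; rewrite acomp_sumr acomp0r.
  under eq_bigr do rewrite (proj1 (crP _ _) (Hg _)).
  by rewrite -big_mkcond.
suff : forall n (U : {set widx X}), (#|U| < n)%N -> g U = 0 by move=> Hn M; apply: (Hn #|M|.+1).
elim=> [|n IH] U hU //.
have := HU U; rewrite (bigD1 U) //= big1 ?addr0 // => M /andP [MU MnU].
have h : (#|M| < #|U|)%N by apply: proper_card; rewrite properEneq MnU MU.
apply: IH; rewrite -ltnS; exact: leq_ltn_trans h hU.
Qed.

End Main.

Theorem mainTheorem3 (L : PSubcat) (C : Cat) (A : AbCat) (T : WFunctor C L A)
  (HT0 : aid (Fob T (wempty C)) = 0) :
  (forall (X Y : wob C) (phi : wmor L X Y) (M : {set widx X})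
          (Z : aob A) (g : ahom Z (Fob T X)),
     in_cr T M g ->
     in_cr T (pimage (wf phi) M) (acomp (Fmor T phi) g) /\
     (~~ (M \subset pdom (wf phi)) -> acomp (Fmor T phi) g = 0))
  /\
  (forall (X : wob C) (M : {set widx X}),
     (forall (Z : aob A) (g : ahom Z (Fob T (wrho M))),
        in_cr T [set: widx (wrho M)] g ->
        in_cr T M (acomp (Fmor T (wincl L M)) g))
     /\ (forall (Z : aob A) (g : ahom Z (Fob T (wrho M))),
        in_cr T [set: widx (wrho M)] g ->
        acomp (Fmor T (wincl L M)) g = 0 -> g = 0)
     /\ (forall (Z : aob A) (h : ahom Z (Fob T X)),
        in_cr T M h ->
        exists g : ahom Z (Fob T (wrho M)),
          in_cr T [set: widx (wrho M)] g /\ acomp (Fmor T (wincl L M)) g = h))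
  /\
  (forall X : wob C,
     (exists p : {set widx X} -> ahom (Fob T X) (Fob T X),
        (forall M, in_cr T M (p M)) /\
        \sum_(M : {set widx X}) p M = aid (Fob T X))
     /\ (forall (Z : aob A) (g : {set widx X} -> ahom Z (Fob T X)),
        (forall M, in_cr T M (g M)) ->
        \sum_(M : {set widx X}) g M = 0 -> forall M, g M = 0)).
Proof.
split; first by move=> X Y phi M Z g Hg; exact: part1.
split.
- move=> X M; split; [|split].
  + move=> Z g Hg; have [H _] := part1 (wincl L M) Hg; by rewrite pimage_incl in H.
  + move=> Z g _ H0.
    have -> : g = acomp (Fmor T (wid L (wrho M))) g by rewrite Fmor_id acomp1l.
    by rewrite -wincl_retr Fmor_comp acompA H0 acomp0r.
  + move=> Z h Hh; exists (acomp (Fmor T (wretr L M)) h); split.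
    * have [H _] := part1 (wretr L M) Hh; by rewrite pimage_retr in H.
    * rewrite -acompA -Fmor_comp.
      change (wcomp (wretr L M) (wincl L M)) with (wd L M).
      by rewrite -/(ee T _) (proj1 (crP _ _) Hh) subxx.
- move=> X; split.
  + by exists (pp T (X := X)); split; [exact: pp_cr | exact: sum_pp].
  + by move=> Z g; exact: cr_uniq.
Qed.
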